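(* Let $k>0$ and consider the system of ODEs, for $r>0$, $\theta$, $z$, $p_R$, $p_S$ real, \[ \dot r = p_R,\quad \dot\theta = \frac{p_S}{r^2},\quad \dot z = \frac{p_S}{2},\quad \dot p_R = \frac{p_S^2}{r^3} - \frac{2kr^3}{(r^4+16z^2)^{3/2}},\quad \dot p_S = -\frac{8kr^2 z}{(r^4+16z^2)^{3/2}}, \] with first integrals $H = \frac12\big(p_R^2+\frac{p_S^2}{r^2}\big) - \frac{k}{\sqrt{r^4+16z^2}}$, \begin{align*} F_1 &= \Big(p_Rp_Sr-2p_R^2z+\frac{2p_S^2z}{r^2}\Big)\cos(2\theta) + \Big(\frac{4p_Rp_Sz}{r}-p_S^2+\frac{kr^2}{\sqrt{r^4+16z^2}}\Big)\sin(2\theta),\\ F_2 &= -\Big(p_Rp_Sr-2p_R^2z+\frac{2p_S^2z}{r^2}\Big)\sin(2\theta) + \Big(\frac{4p_Rp_Sz}{r}-p_S^2+\frac{kr^2}{\sqrt{r^4+16z^2}}\Big)\cos(2\theta),\\ F_3 &= (2zp_R-rp_S)^2 + 4z^2\Big(\frac{p_S^2}{r^2}+\frac{2k}{\sqrt{r^4+16z^2}}\Big). \end{align*} Let $J\ge 0$ and (when $J>0$) $\theta_0\in[0,\pi)$ be defined by $F_1 = J\sin(2\theta_0)$, $F_2 = J\cos(2\theta_0)$ (so $J^2 = F_1^2+F_2^2 = 2HF_3+k^2$). Then every trajectory with fixed values of $H, F_3, \theta_0$ lies on a surface (in coordinates $(r,\theta,z)$) as follows: (i) in the general case $F_3>0$,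 $J>0$, the surface \[ F_3 = 8z^2H + k\sqrt{r^4+16z^2} - \sqrt{k^2+2HF_3}\, r^2\cos\big(2(\theta-\theta_0)\big); \] (ii) in the minimum energy case $F_3>0$, $J=0$, the ellipsoid of revolution $4k^2z^2 + kF_3 r^2 = F_3^2$; (iii) in the degenerate case $F_3=0$, the straight horizontal line through the origin given by $z=0$, $\theta = \theta_0 \bmod \pi$.
   Context: Cylindrical coordinates $x=r\cos\theta$, $y=r\sin\theta$ on $\mathbb{R}^3$ (the Heisenberg group); the system describes nonholonomic motion on the Heisenberg group in the potential $-k/\sqrt{r^4+16z^2}$. $H,F_1,F_2,F_3$ are constant along solutions, and $F_3\ge 0$. *)

(* Defs.v *)
From Stdlib Require Import Reals ZArith.
From Coquelicot Require Import Coquelicot.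
Open Scope R_scope.

Definition Dq (r z : R) : R := r ^ 4 + 16 * z ^ 2.

Definition Hf (k r th z pR pS : R) : R :=
  1 / 2 * (pR ^ 2 + pS ^ 2 / r ^ 2) - k / sqrt (Dq r z).

Definition Af (k r z pR pS : R) : R :=
  pR * pS * r - 2 * pR ^ 2 * z + 2 * pS ^ 2 * z / r ^ 2.
Definition Bf (k r z pR pS : R) : R :=
  4 * pR * pS * z / r - pS ^ 2 + k * r ^ 2 / sqrt (Dq r z).

Definition F1f (k r th z pR pS : R) : R :=
  Af k r z pR pS * cos (2 * th) + Bf k r z pR pS * sin (2 * th).
Definition F2f (k r th z pR pS : R) : R :=
  - (Af k r z pR pS * sin (2 * th)) + Bf k r z pR pS * cos (2 * th).
Definition F3f (k r th z pR pS : R) : R :=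
  (2 * z * pR - r * pS) ^ 2 + 4 * z ^ 2 * (pS ^ 2 / r ^ 2 + 2 * k / sqrt (Dq r z)).

(* (r,th,z,pR,pS) is a solution of the ODE system on the open interval (a,b).
   (r^4+16z^2)^{3/2} is written as D * sqrt D. *)
Definition is_trajectory (k a b : R) (r th z pR pS : R -> R) : Prop :=
  forall t, a < t < b ->
    0 < r t /\
    is_derive r t (pR t) /\
    is_derive th t (pS t / (r t) ^ 2) /\
    is_derive z t (pS t / 2) /\
    is_derive pR t (pS t ^ 2 / r t ^ 3
        - 2 * k * r t ^ 3 / (Dq (r t) (z t) * sqrt (Dq (r t) (z t)))) /\
    is_derive pS t (- (8 * k * r t ^ 2 * z t)
        / (Dq (r t) (z t) * sqrt (Dq (r t) (z t)))).

(* Main.v *)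
Require Import Defs.
From Stdlib Require Import Reals ZArith Lra Lia.
From Coquelicot Require Import Coquelicot.
Open Scope R_scope.

Lemma const_on (a b t0 t : R) (G : R -> R) :
  a < t0 < b -> a < t < b -> (forall s, a < s < b -> is_derive G s 0) -> G t = G t0.
Proof.
intros H0 H1 HD.
destruct (Rtotal_order t t0) as [Hl|[He|Hg]].
- apply (eq_is_derive G t t0); [intros s Hs; apply HD; lra | lra].
- now subst.
- symmetry; apply (eq_is_derive G t0 t); [intros s Hs; apply HD; lra | lra].
Qed.

Lemma Dq_pos r z : 0 < r -> 0 < Dq r z.
Proof. intros H; unfold Dq. pose proof (pow_lt r 4 H). nra. Qed.

Lemma H_deriv k a b r th z pR pS t : is_trajectory k a b r th z pR pS -> a < t < b ->
  is_derive (fun t => Hf k (r t) (th t) (z t) (pR t) (pS t)) t 0.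
Proof.
intros HT Ht. destruct (HT t Ht) as (Hr & Dr & Dth & Dz & DpR & DpS).
assert (HD := Dq_pos (r t) (z t) Hr).
unfold Hf, Dq in *.
assert (E1 : Derive (fun x => r x) t = pR t) by (apply is_derive_unique; exact Dr).
assert (E2 : Derive (fun x => z x) t = pS t / 2) by (apply is_derive_unique; exact Dz).
assert (E3 : Derive (fun x => pR x) t = pS t ^ 2 / r t ^ 3
        - 2 * k * r t ^ 3 / ((r t ^ 4 + 16 * z t ^ 2) * sqrt (r t ^ 4 + 16 * z t ^ 2))) by (apply is_derive_unique; exact DpR).
assert (E4 : Derive (fun x => pS x) t = - (8 * k * r t ^ 2 * z t) / ((r t ^ 4 + 16 * z t ^ 2) * sqrt (r t ^ 4 + 16 * z t ^ 2))) by (apply is_derive_unique; exact DpS).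
assert (E5 : Derive (fun x => th x) t = pS t / r t ^ 2) by (apply is_derive_unique; exact Dth).
assert (HS : 0 < sqrt (r t ^ 4 + 16 * z t ^ 2)) by (apply sqrt_lt_R0; lra).
auto_derive.
all: try (replace (r t * (r t * (r t * (r t * 1))) + 16 * (z t * (z t * 1))) with (r t ^ 4 + 16 * z t ^ 2) by ring).
all: try solve [repeat split; try (eexists; eassumption); try lra; intro Hc; nra].
try rewrite E1; try rewrite E2; try rewrite E3; try rewrite E4; try rewrite E5.
assert (HSq : sqrt (r t ^ 4 + 16 * z t ^ 2) ^ 2 = r t ^ 4 + 16 * z t ^ 2) by (rewrite <- Rsqr_pow2; apply Rsqr_sqrt; lra).
set (Sq := sqrt (r t ^ 4 + 16 * z t ^ 2)) in *.
assert (HS3 : Sq ^ 3 = (r t ^ 4 + 16 * z t ^ 2) * Sq) by (rewrite <- HSq; ring).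
assert (HS4 : Sq ^ 4 = (r t ^ 4 + 16 * z t ^ 2) ^ 2) by (rewrite <- HSq; ring).
rewrite <- HSq.
match goal with |- ?x = _ => change (@eq R x 0) end. change RinvImpl.Rinv with Rinv. field_simplify; [ try (unfold Rdiv; apply Rmult_eq_0_compat_r); rewrite ?HS4, ?HS3, ?HSq; ring | repeat split; lra ].
Qed.

Lemma F3_deriv k a b r th z pR pS t : is_trajectory k a b r th z pR pS -> a < t < b ->
  is_derive (fun t => F3f k (r t) (th t) (z t) (pR t) (pS t)) t 0.
Proof.
intros HT Ht. destruct (HT t Ht) as (Hr & Dr & Dth & Dz & DpR & DpS).
assert (HD := Dq_pos (r t) (z t) Hr).
unfold F3f, Dq in *.
assert (E1 : Derive (fun x => r x) t = pR t) by (apply is_derive_unique; exact Dr).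
assert (E2 : Derive (fun x => z x) t = pS t / 2) by (apply is_derive_unique; exact Dz).
assert (E3 : Derive (fun x => pR x) t = pS t ^ 2 / r t ^ 3
        - 2 * k * r t ^ 3 / ((r t ^ 4 + 16 * z t ^ 2) * sqrt (r t ^ 4 + 16 * z t ^ 2))) by (apply is_derive_unique; exact DpR).
assert (E4 : Derive (fun x => pS x) t = - (8 * k * r t ^ 2 * z t) / ((r t ^ 4 + 16 * z t ^ 2) * sqrt (r t ^ 4 + 16 * z t ^ 2))) by (apply is_derive_unique; exact DpS).
assert (E5 : Derive (fun x => th x) t = pS t / r t ^ 2) by (apply is_derive_unique; exact Dth).
assert (HS : 0 < sqrt (r t ^ 4 + 16 * z t ^ 2)) by (apply sqrt_lt_R0; lra).
auto_derive.
all: try (replace (r t * (r t * (r t * (r t * 1))) + 16 * (z t * (z t * 1))) with (r t ^ 4 + 16 * z t ^ 2) by ring).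
all: try solve [repeat split; try (eexists; eassumption); try lra; intro Hc; nra].
try rewrite E1; try rewrite E2; try rewrite E3; try rewrite E4; try rewrite E5.
assert (HSq : sqrt (r t ^ 4 + 16 * z t ^ 2) ^ 2 = r t ^ 4 + 16 * z t ^ 2) by (rewrite <- Rsqr_pow2; apply Rsqr_sqrt; lra).
set (Sq := sqrt (r t ^ 4 + 16 * z t ^ 2)) in *.
assert (HS3 : Sq ^ 3 = (r t ^ 4 + 16 * z t ^ 2) * Sq) by (rewrite <- HSq; ring).
assert (HS4 : Sq ^ 4 = (r t ^ 4 + 16 * z t ^ 2) ^ 2) by (rewrite <- HSq; ring).
rewrite <- HSq.
match goal with |- ?x = _ => change (@eq R x 0) end. change RinvImpl.Rinv with Rinv. field_simplify; [ try (unfold Rdiv; apply Rmult_eq_0_compat_r); rewrite ?HS4, ?HS3, ?HSq; ring | repeat split; lra ].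
Qed.

Lemma F1_deriv k a b r th z pR pS t : is_trajectory k a b r th z pR pS -> a < t < b ->
  is_derive (fun t => F1f k (r t) (th t) (z t) (pR t) (pS t)) t 0.
Proof.
intros HT Ht. destruct (HT t Ht) as (Hr & Dr & Dth & Dz & DpR & DpS).
assert (HD := Dq_pos (r t) (z t) Hr).
unfold F1f, Af, Bf, Dq in *.
assert (E1 : Derive (fun x => r x) t = pR t) by (apply is_derive_unique; exact Dr).
assert (E2 : Derive (fun x => z x) t = pS t / 2) by (apply is_derive_unique; exact Dz).
assert (E3 : Derive (fun x => pR x) t = pS t ^ 2 / r t ^ 3
        - 2 * k * r t ^ 3 / ((r t ^ 4 + 16 * z t ^ 2) * sqrt (r t ^ 4 + 16 * z t ^ 2))) by (apply is_derive_unique; exact DpR).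
assert (E4 : Derive (fun x => pS x) t = - (8 * k * r t ^ 2 * z t) / ((r t ^ 4 + 16 * z t ^ 2) * sqrt (r t ^ 4 + 16 * z t ^ 2))) by (apply is_derive_unique; exact DpS).
assert (E5 : Derive (fun x => th x) t = pS t / r t ^ 2) by (apply is_derive_unique; exact Dth).
assert (HS : 0 < sqrt (r t ^ 4 + 16 * z t ^ 2)) by (apply sqrt_lt_R0; lra).
auto_derive.
all: try (replace (r t * (r t * (r t * (r t * 1))) + 16 * (z t * (z t * 1))) with (r t ^ 4 + 16 * z t ^ 2) by ring).
all: try solve [repeat split; try (eexists; eassumption); try lra; intro Hc; nra].
try rewrite E1; try rewrite E2; try rewrite E3; try rewrite E4; try rewrite E5.
assert (HSq : sqrt (r t ^ 4 + 16 * z t ^ 2) ^ 2 = r t ^ 4 + 16 * z t ^ 2) by (rewrite <- Rsqr_pow2; apply Rsqr_sqrt; lra).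
set (Sq := sqrt (r t ^ 4 + 16 * z t ^ 2)) in *.
assert (HS3 : Sq ^ 3 = (r t ^ 4 + 16 * z t ^ 2) * Sq) by (rewrite <- HSq; ring).
assert (HS4 : Sq ^ 4 = (r t ^ 4 + 16 * z t ^ 2) ^ 2) by (rewrite <- HSq; ring).
rewrite <- HSq.
match goal with |- ?x = _ => change (@eq R x 0) end. change RinvImpl.Rinv with Rinv. field_simplify; [ try (unfold Rdiv; apply Rmult_eq_0_compat_r); rewrite ?HS4, ?HS3, ?HSq; ring | repeat split; lra ].
Qed.

Lemma F2_deriv k a b r th z pR pS t : is_trajectory k a b r th z pR pS -> a < t < b ->
  is_derive (fun t => F2f k (r t) (th t) (z t) (pR t) (pS t)) t 0.
Proof.
intros HT Ht. destruct (HT t Ht) as (Hr & Dr & Dth & Dz & DpR & DpS).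
assert (HD := Dq_pos (r t) (z t) Hr).
unfold F2f, Af, Bf, Dq in *.
assert (E1 : Derive (fun x => r x) t = pR t) by (apply is_derive_unique; exact Dr).
assert (E2 : Derive (fun x => z x) t = pS t / 2) by (apply is_derive_unique; exact Dz).
assert (E3 : Derive (fun x => pR x) t = pS t ^ 2 / r t ^ 3
        - 2 * k * r t ^ 3 / ((r t ^ 4 + 16 * z t ^ 2) * sqrt (r t ^ 4 + 16 * z t ^ 2))) by (apply is_derive_unique; exact DpR).
assert (E4 : Derive (fun x => pS x) t = - (8 * k * r t ^ 2 * z t) / ((r t ^ 4 + 16 * z t ^ 2) * sqrt (r t ^ 4 + 16 * z t ^ 2))) by (apply is_derive_unique; exact DpS).
assert (E5 : Derive (fun x => th x) t = pS t / r t ^ 2) by (apply is_derive_unique; exact Dth).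
assert (HS : 0 < sqrt (r t ^ 4 + 16 * z t ^ 2)) by (apply sqrt_lt_R0; lra).
auto_derive.
all: try (replace (r t * (r t * (r t * (r t * 1))) + 16 * (z t * (z t * 1))) with (r t ^ 4 + 16 * z t ^ 2) by ring).
all: try solve [repeat split; try (eexists; eassumption); try lra; intro Hc; nra].
try rewrite E1; try rewrite E2; try rewrite E3; try rewrite E4; try rewrite E5.
assert (HSq : sqrt (r t ^ 4 + 16 * z t ^ 2) ^ 2 = r t ^ 4 + 16 * z t ^ 2) by (rewrite <- Rsqr_pow2; apply Rsqr_sqrt; lra).
set (Sq := sqrt (r t ^ 4 + 16 * z t ^ 2)) in *.
assert (HS3 : Sq ^ 3 = (r t ^ 4 + 16 * z t ^ 2) * Sq) by (rewrite <- HSq; ring).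
assert (HS4 : Sq ^ 4 = (r t ^ 4 + 16 * z t ^ 2) ^ 2) by (rewrite <- HSq; ring).
rewrite <- HSq.
match goal with |- ?x = _ => change (@eq R x 0) end. change RinvImpl.Rinv with Rinv. field_simplify; [ try (unfold Rdiv; apply Rmult_eq_0_compat_r); rewrite ?HS4, ?HS3, ?HSq; ring | repeat split; lra ].
Qed.


Lemma sqrt_facts R Z : 0 < R -> 0 < sqrt (Dq R Z) /\ sqrt (Dq R Z) ^ 2 = R ^ 4 + 16 * Z ^ 2.
Proof.
intros HR. pose proof (Dq_pos R Z HR). split.
- apply sqrt_lt_R0; lra.
- rewrite <- Rsqr_pow2, Rsqr_sqrt; unfold Dq in *; lra.
Qed.

Lemma alg_J k R Z X Y th : 0 < R ->
  Af k R Z X Y ^ 2 + Bf k R Z X Y ^ 2 = k ^ 2 + 2 * Hf k R th Z X Y * F3f k R th Z X Y.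
Proof.
intros HR. destruct (sqrt_facts R Z HR) as [HS HSq].
unfold Af, Bf, Hf, F3f. set (Sq := sqrt (Dq R Z)) in *.
assert (HS3 : Sq ^ 3 = (R ^ 4 + 16 * Z ^ 2) * Sq) by (rewrite <- HSq; ring).
assert (HS4 : Sq ^ 4 = (R ^ 4 + 16 * Z ^ 2) ^ 2) by (rewrite <- HSq; ring).
apply Rminus_diag_uniq; field_simplify; [ try (unfold Rdiv; apply Rmult_eq_0_compat_r); rewrite ?HS4, ?HS3, ?HSq; ring | repeat split; lra .. ].
Qed.

Ltac sq_close HSq HS3 HS4 :=
  apply Rminus_diag_uniq; field_simplify;
  [ try (unfold Rdiv; apply Rmult_eq_0_compat_r); rewrite ?HS4, ?HS3, ?HSq; ring | repeat split; lra .. ].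

Lemma alg_surf k R Z X Y th : 0 < R ->
  F3f k R th Z X Y = 8 * Z ^ 2 * Hf k R th Z X Y + k * sqrt (Dq R Z) - R ^ 2 * Bf k R Z X Y.
Proof.
intros HR. destruct (sqrt_facts R Z HR) as [HS HSq].
unfold Af, Bf, Hf, F3f. set (Sq := sqrt (Dq R Z)) in *.
assert (HS3 : Sq ^ 3 = (R ^ 4 + 16 * Z ^ 2) * Sq) by (rewrite <- HSq; ring).
assert (HS4 : Sq ^ 4 = (R ^ 4 + 16 * Z ^ 2) ^ 2) by (rewrite <- HSq; ring).
sq_close HSq HS3 HS4.
Qed.

Lemma alg_AB k R Z X Y th :
  Af k R Z X Y = F1f k R th Z X Y * cos (2 * th) - F2f k R th Z X Y * sin (2 * th) /\
  Bf k R Z X Y = F1f k R th Z X Y * sin (2 * th) + F2f k R th Z X Y * cos (2 * th).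
Proof.
assert (E := sin2_cos2 (2 * th)). unfold Rsqr in E. unfold F1f, F2f.
set (A := Af k R Z X Y). set (B := Bf k R Z X Y).
set (c := cos (2 * th)) in *. set (s := sin (2 * th)) in *.
split.
- transitivity (A * (s * s + c * c)); [rewrite E; ring | ring].
- transitivity (B * (s * s + c * c)); [rewrite E; ring | ring].
Qed.

Lemma alg_F12 k R Z X Y th :
  F1f k R th Z X Y ^ 2 + F2f k R th Z X Y ^ 2 = Af k R Z X Y ^ 2 + Bf k R Z X Y ^ 2.
Proof.
assert (E := sin2_cos2 (2 * th)). unfold Rsqr in E. unfold F1f, F2f.
set (A := Af k R Z X Y). set (B := Bf k R Z X Y).
set (c := cos (2 * th)) in *. set (s := sin (2 * th)) in *.
transitivity ((A ^ 2 + B ^ 2) * (s * s + c * c)); [ring | rewrite E; ring].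
Qed.

Lemma sq0 x : x ^ 2 = 0 -> x = 0.
Proof. intros h. apply Rsqr_0_uniq. unfold Rsqr. rewrite <- h. ring. Qed.

Lemma alg_F3zero k R Z X Y th : 0 < k -> 0 < R -> F3f k R th Z X Y = 0 -> Z = 0 /\ Y = 0.
Proof.
intros Hk HR H. destruct (sqrt_facts R Z HR) as [HS HSq].
unfold F3f in H. set (Sq := sqrt (Dq R Z)) in *.
assert (Ha : 0 <= Y ^ 2 / R ^ 2).
{ apply Rdiv_le_0_compat; [nra | apply pow_lt; lra]. }
assert (Hb : 0 < 2 * k / Sq) by (apply Rdiv_lt_0_compat; lra).
assert (HZ : Z = 0).
{ set (a := Y ^ 2 / R ^ 2) in *. set (bb := 2 * k / Sq) in *.
  assert (h1 := pow2_ge_0 (2 * Z * X - R * Y)).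
  assert (h2 : 0 <= Z ^ 2 * a) by (apply Rmult_le_pos; [apply pow2_ge_0 | lra]).
  assert (h3 : Z ^ 2 * bb = 0) by nra.
  apply Rmult_integral in h3. destruct h3 as [h3|h3]; [|lra].
  exact (sq0 _ h3). }
subst Z. split; [reflexivity|].
assert (h : (R * Y) ^ 2 = 0).
{ assert (0 <= 4 * 0 ^ 2 * (Y ^ 2 / R ^ 2 + 2 * k / Sq)) by (simpl; lra). nra. }
apply sq0 in h. apply Rmult_integral in h. lra.
Qed.

Lemma core_ii k R Z u v S : 0 < k -> 0 < R -> 0 < S -> S ^ 2 = R ^ 4 + 16 * Z ^ 2 ->
  u * v * R ^ 2 - 2 * u ^ 2 * Z + 2 * v ^ 2 * Z = 0 ->
  4 * u * v * Z - v ^ 2 * R ^ 2 + k * R ^ 2 / S = 0 ->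
  ((2 * Z * u - R ^ 2 * v) ^ 2 + 4 * Z ^ 2 * v ^ 2 + 8 * k * Z ^ 2 / S) * (S - R ^ 2)
   = 8 * k * Z ^ 2.
Proof.
intros Hk HR HS HSq HA HB.
assert (HS3 : S ^ 3 = (R ^ 4 + 16 * Z ^ 2) * S) by (rewrite <- HSq; ring).
assert (HS4 : S ^ 4 = (R ^ 4 + 16 * Z ^ 2) ^ 2) by (rewrite <- HSq; ring).
assert (HR2 : 0 < R ^ 2) by (apply pow_lt; lra).
destruct (Req_dec Z 0) as [HZ | HZ].
{ subst Z. assert (S = R ^ 2) by nra. subst S. ring. }
set (W := u ^ 2 + v ^ 2). set (Q := 2 * u * v). set (P := u ^ 2 - v ^ 2).
set (q := Q * S / (4 * Z)).
assert (hP : P = Q * R ^ 2 / (4 * Z)).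
{ apply Rminus_diag_uniq.
  replace (P - Q * R ^ 2 / (4 * Z)) with (- (u * v * R ^ 2 - 2 * u ^ 2 * Z + 2 * v ^ 2 * Z) / (2 * Z))
    by (unfold P, Q; field; lra).
  rewrite HA. field. lra. }
assert (hv : v ^ 2 = 2 * Z * Q / R ^ 2 + k / S).
{ unfold Q. apply Rminus_diag_uniq.
  replace (v ^ 2 - (2 * Z * (2 * u * v) / R ^ 2 + k / S))
    with (- (4 * u * v * Z - v ^ 2 * R ^ 2 + k * R ^ 2 / S) / R ^ 2) by (field; lra).
  rewrite HB. field. lra. }
assert (hW : W = q * S / R ^ 2 + 2 * k / S).
{ replace W with (P + 2 * v ^ 2) by (unfold W, P; ring).
  rewrite hP, hv. unfold q. sq_close HSq HS3 HS4. }
assert (hWq : W ^ 2 = q ^ 2).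
{ replace (W ^ 2) with (P ^ 2 + Q ^ 2) by (unfold W, P, Q; ring).
  rewrite hP. unfold q. sq_close HSq HS3 HS4. }
assert (HW0 : 0 <= W) by (unfold W; nra).
assert (HSR : R ^ 2 < S).
{ assert (0 < Z * Z) by (apply Rsqr_pos_lt; auto). nra. }
assert (hF : (2 * Z * u - R ^ 2 * v) ^ 2 + 4 * Z ^ 2 * v ^ 2 + 8 * k * Z ^ 2 / S
   = 4 * Z ^ 2 * W + k * (R ^ 4 + 8 * Z ^ 2) / S).
{ apply Rminus_diag_uniq.
  replace ((2 * Z * u - R ^ 2 * v) ^ 2 + 4 * Z ^ 2 * v ^ 2 + 8 * k * Z ^ 2 / S -
    (4 * Z ^ 2 * W + k * (R ^ 4 + 8 * Z ^ 2) / S))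
   with (- R ^ 2 * (4 * u * v * Z - v ^ 2 * R ^ 2 + k * R ^ 2 / S)) by (unfold W; field; lra).
  rewrite HB. ring. }
assert (hfac : (W - q) * (W + q) = 0) by (rewrite <- (Rminus_diag_eq _ _ hWq); ring).
apply Rmult_integral in hfac. destruct hfac as [hq | hq].
- exfalso. assert (Wq : W = q) by lra. rewrite Wq in hW.
  assert (e : q - q * S / R ^ 2 = 2 * k / S) by lra.
  assert (e2 : q * (R ^ 2 - S) = 2 * k * R ^ 2 / S).
  { replace (q * (R ^ 2 - S)) with (R ^ 2 * (q - q * S / R ^ 2)) by (field; lra).
    rewrite e. field. lra. }
  assert (0 < 2 * k * R ^ 2 / S) by (apply Rdiv_lt_0_compat; nra).
  assert (q < 0) by nra. lra.
- assert (Wq : q = - W) by lra. rewrite Wq in hW.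
  assert (e : W + W * S / R ^ 2 = 2 * k / S) by lra.
  assert (hWv : W * (S * (S + R ^ 2)) = 2 * k * R ^ 2).
  { replace (W * (S * (S + R ^ 2))) with ((W + W * S / R ^ 2) * (S * R ^ 2)) by (field; lra).
    rewrite e. field. lra. }
  rewrite hF.
  apply Rmult_eq_reg_r with (S * (S + R ^ 2)); [| nra].
  replace ((4 * Z ^ 2 * W + k * (R ^ 4 + 8 * Z ^ 2) / S) * (S - R ^ 2) * (S * (S + R ^ 2)))
    with (4 * Z ^ 2 * (S - R ^ 2) * (W * (S * (S + R ^ 2))) + k * (R ^ 4 + 8 * Z ^ 2) * (S - R ^ 2) * (S + R ^ 2))
    by (field; lra).
  rewrite hWv. apply Rminus_diag_uniq. ring_simplify. rewrite ?HS4, ?HS3, ?HSq. ring.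
Qed.

Lemma alg_ii k R Z X Y th : 0 < k -> 0 < R -> Af k R Z X Y = 0 -> Bf k R Z X Y = 0 ->
  F3f k R th Z X Y * (sqrt (Dq R Z) - R ^ 2) = 8 * k * Z ^ 2.
Proof.
intros Hk HR HA HB. destruct (sqrt_facts R Z HR) as [HS HSq].
replace (F3f k R th Z X Y) with
  ((2 * Z * X - R ^ 2 * (Y / R)) ^ 2 + 4 * Z ^ 2 * (Y / R) ^ 2 + 8 * k * Z ^ 2 / sqrt (Dq R Z))
  by (unfold F3f; field; lra).
apply core_ii; auto.
- unfold Af in HA. rewrite <- HA. field. lra.
- unfold Bf in HB. rewrite <- HB. field. lra.
Qed.

Theorem theorem3 (k a b t0 : R) (r th z pR pS : R -> R) (J th0 : R) :
  0 < k ->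
  a < t0 < b ->
  is_trajectory k a b r th z pR pS ->
  let H0 := Hf k (r t0) (th t0) (z t0) (pR t0) (pS t0) in
  let F30 := F3f k (r t0) (th t0) (z t0) (pR t0) (pS t0) in
  0 <= J ->
  0 <= th0 < PI ->
  F1f k (r t0) (th t0) (z t0) (pR t0) (pS t0) = J * sin (2 * th0) ->
  F2f k (r t0) (th t0) (z t0) (pR t0) (pS t0) = J * cos (2 * th0) ->
  forall t, a < t < b ->
    (0 < F30 -> 0 < J ->
       F30 = 8 * z t ^ 2 * H0 + k * sqrt (Dq (r t) (z t))
             - sqrt (k ^ 2 + 2 * H0 * F30) * r t ^ 2 * cos (2 * (th t - th0))) /\
    (0 < F30 -> J = 0 ->
       4 * k ^ 2 * z t ^ 2 + k * F30 * r t ^ 2 = F30 ^ 2) /\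
    (F30 = 0 ->
       z t = 0 /\ exists n : Z, th t = th0 + IZR n * PI).
Proof.
intros Hk Ht0 HT H0 F30 HJ Hth0 HF1 HF2 t Ht.
assert (cH : Hf k (r t) (th t) (z t) (pR t) (pS t) = H0)
  by exact (const_on a b t0 t (fun s => Hf k (r s) (th s) (z s) (pR s) (pS s)) Ht0 Ht
             (fun s hs => H_deriv k a b r th z pR pS s HT hs)).
assert (cF3 : forall s, a < s < b -> F3f k (r s) (th s) (z s) (pR s) (pS s) = F30)
  by (intros s hs; exact (const_on a b t0 s (fun s => F3f k (r s) (th s) (z s) (pR s) (pS s)) Ht0 hs
             (fun s hs => F3_deriv k a b r th z pR pS s HT hs))).
assert (cF1 : F1f k (r t) (th t) (z t) (pR t) (pS t) = J * sin (2 * th0)).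
{ rewrite <- HF1. exact (const_on a b t0 t (fun s => F1f k (r s) (th s) (z s) (pR s) (pS s)) Ht0 Ht
             (fun s hs => F1_deriv k a b r th z pR pS s HT hs)). }
assert (cF2 : F2f k (r t) (th t) (z t) (pR t) (pS t) = J * cos (2 * th0)).
{ rewrite <- HF2. exact (const_on a b t0 t (fun s => F2f k (r s) (th s) (z s) (pR s) (pS s)) Ht0 Ht
             (fun s hs => F2_deriv k a b r th z pR pS s HT hs)). }
destruct (HT t Ht) as [Hr _].
destruct (HT t0 Ht0) as [Hr0 _].
assert (HJ2 : J ^ 2 = k ^ 2 + 2 * H0 * F30).
{ assert (E := sin2_cos2 (2 * th0)). unfold Rsqr in E.
  transitivity (F1f k (r t0) (th t0) (z t0) (pR t0) (pS t0) ^ 2 + F2f k (r t0) (th t0) (z t0) (pR t0) (pS t0) ^ 2).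
  - rewrite HF1, HF2. transitivity (J ^ 2 * (sin (2 * th0) * sin (2 * th0) + cos (2 * th0) * cos (2 * th0))); [rewrite E; ring | ring].
  - rewrite alg_F12. apply alg_J. exact Hr0. }
assert (HsqJ : sqrt (k ^ 2 + 2 * H0 * F30) = J) by (rewrite <- HJ2; apply sqrt_pow2; exact HJ).
destruct (alg_AB k (r t) (z t) (pR t) (pS t) (th t)) as [EA EB].
rewrite cF1, cF2 in EA, EB.
assert (S1 := alg_surf k (r t) (z t) (pR t) (pS t) (th t) Hr).
rewrite (cF3 t Ht), cH in S1.
split; [| split].
- intros _ _. rewrite HsqJ.
  replace (2 * (th t - th0)) with (2 * th t - 2 * th0) by ring.
  rewrite cos_minus. rewrite S1 at 1. rewrite EB. ring.
- intros HF3p HJ0. rewrite HJ0 in EA, EB, HJ2.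
  assert (A0 : Af k (r t) (z t) (pR t) (pS t) = 0) by (rewrite EA; ring).
  assert (B0 : Bf k (r t) (z t) (pR t) (pS t) = 0) by (rewrite EB; ring).
  assert (Hii := alg_ii k (r t) (z t) (pR t) (pS t) (th t) Hk Hr A0 B0).
  rewrite (cF3 t Ht) in Hii. rewrite B0 in S1.
  assert (HHF : 2 * H0 * F30 = - k ^ 2) by (simpl in HJ2; lra).
  set (Sq := sqrt (Dq (r t) (z t))) in *.
  assert (e1 : F30 ^ 2 = 4 * z t ^ 2 * (2 * H0 * F30) + k * Sq * F30).
  { transitivity (F30 * (8 * z t ^ 2 * H0 + k * Sq - r t ^ 2 * 0)); [rewrite <- S1; ring | ring]. }
  rewrite e1, HHF. nra.
- intros HF30.
  assert (Hzero : forall s, a < s < b -> z s = 0 /\ pS s = 0).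
  { intros s hs. destruct (HT s hs) as [Hrs _].
    apply (alg_F3zero k (r s) (z s) (pR s) (pS s) (th s) Hk Hrs).
    rewrite (cF3 s hs). exact HF30. }
  split; [apply Hzero; auto |].
  assert (cth : th t = th t0).
  { apply (const_on a b t0 t th Ht0 Ht). intros s hs.
    destruct (HT s hs) as (_ & _ & Dth & _). destruct (Hzero s hs) as [_ hp].
    rewrite hp in Dth. unfold Rdiv in Dth. rewrite Rmult_0_l in Dth. exact Dth. }
  destruct (Hzero t0 Ht0) as [hz0 hp0].
  destruct (sqrt_facts (r t0) (z t0) Hr0) as [hs hsq].
  assert (A0 : Af k (r t0) (z t0) (pR t0) (pS t0) = 0).
  { unfold Af. rewrite hz0, hp0. field. lra. }
  assert (B0 : Bf k (r t0) (z t0) (pR t0) (pS t0) = k).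
  { rewrite hz0 in hs, hsq. assert (hS : sqrt (Dq (r t0) 0) = r t0 ^ 2) by nra.
    unfold Bf. rewrite hz0, hp0, hS. field. lra. }
  unfold F1f in HF1. unfold F2f in HF2. rewrite A0, B0 in HF1, HF2.
  set (th1 := th t0) in *.
  assert (E1 := sin2_cos2 (2 * th1)). assert (E0 := sin2_cos2 (2 * th0)). unfold Rsqr in E1, E0.
  assert (HJk : J = k).
  { assert (J ^ 2 = k ^ 2).
    { transitivity (J ^ 2 * (sin (2 * th0) * sin (2 * th0) + cos (2 * th0) * cos (2 * th0))); [rewrite E0; ring|].
      transitivity (k ^ 2 * (sin (2 * th1) * sin (2 * th1) + cos (2 * th1) * cos (2 * th1))); [|rewrite E1; ring].
      transitivity ((J * sin (2 * th0)) ^ 2 + (J * cos (2 * th0)) ^ 2); [ring|].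
      rewrite <- HF1, <- HF2. ring. }
    nra. }
  rewrite HJk in HF1, HF2.
  assert (es : sin (2 * th1) = sin (2 * th0)) by (apply (Rmult_eq_reg_l k); lra).
  assert (ec : cos (2 * th1) = cos (2 * th0)) by (apply (Rmult_eq_reg_l k); lra).
  assert (hc : cos (2 * (th1 - th0)) = 1).
  { replace (2 * (th1 - th0)) with (2 * th1 - 2 * th0) by ring.
    rewrite cos_minus, es, ec. lra. }
  rewrite cos_2a_sin in hc.
  assert (hsn : sin (th1 - th0) = 0) by nra.
  destruct (sin_eq_0_0 _ hsn) as [n hn]. exists n. rewrite cth. lra.
Qed.
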